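(* Let $p$ and $q$ be positive integers, let $m_1<m_2<\cdots<m_q$ be positive integers and let $v_1,\dots,v_q$ be positive integers. Let $A_n$ be the number of ways to tile an $n$-board using $v_i$ colours of $(1/p,1-1/p;m_i)$-combs for $i=1,\ldots,q$. Define $s_n$ by $s_n=v_1s_{n-m_1}+\cdots+v_qs_{n-m_q}+\delta_{n,0}$ for $n\ge0$ and $s_n=0$ for $n<0$. Then for all $n\ge 0$, $A_n=s_n^p$.
   Context: An $n$-board is the strip $[0,n]\times[0,1]$ divided into $n$ unit square cells. A $(w,g;m)$-comb is a tile consisting of a row of $m$ rectangles (teeth) of size $w\times 1$, consecutive teeth separated by a gap of width $g$; the gaps are not part of the tile and may be occupied by other tiles. A tiling of a board is a placement of translated (unrotated) copies of tiles so that the teeth cover the board exactly with no overlaps; tiles of the same shape but different colours are distinguished. $\delta_{i,j}$ equals $1$ if $i=j$ and $0$ otherwise. *)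

(* Defs.v *)
From mathcomp Require Import all_boot all_order all_algebra.
Set Implicit Arguments. Unset Strict Implicit. Unset Printing Implicit Defensive.

(* Discrete model of the n-board: it is cut into p*n slots of width 1/p,
   slot x being [x/p, (x+1)/p] x [0,1].  A (1/p, 1-1/p; m)-comb placed with
   its first tooth on slot s has its teeth on slots s, s+p, ..., s+(m-1)p. *)
Definition comb_slots (p m s : nat) : seq nat := [seq s + k * p | k <- iota 0 m].

(* A placed tile: starting slot, comb type i : 'I_q and a colour c : 'I_(v i). *)
Definition placement (p n q : nat) (v : 'I_q -> nat) : finType :=
  ('I_(p * n) * {i : 'I_q & 'I_(v i)})%type.

Definition ptype p n q (v : 'I_q -> nat) (P : placement p n v) : 'I_q := tag P.2.

Definition pslots p n q (m v : 'I_q -> nat) (P : placement p n v) : seq nat :=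
  comb_slots p (m (ptype P)) (nat_of_ord P.1).

Definition is_tiling p n q (m v : 'I_q -> nat) (T : {set placement p n v}) : bool :=
  [forall P in T, all (fun x => x < p * n) (pslots m P)] &&
  [forall x : 'I_(p * n), #|[set P in T | nat_of_ord x \in pslots m P]| == 1].

Definition tilings p n q (m v : 'I_q -> nat) : {set {set placement p n v}} :=
  [set T | is_tiling m T].

Definition A_count p n q (m v : 'I_q -> nat) : nat := #|tilings p n m v|.

(* Main.v *)
Require Import Defs.
From mathcomp Require Import all_boot all_order all_algebra zify.
From Stdlib Require Import FunctionalExtensionality.
Set Implicit Arguments. Unset Strict Implicit. Unset Printing Implicit Defensive.

Lemma lt_split p r a b : r < p -> (r + p * a < p * b) = (a < b).
Proof.
move=> rp; apply/idP/idP => h.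
  rewrite ltnNge; apply/negP => ba.
  have : p * b <= r + p * a by apply: leq_trans (leq_addl r _); rewrite leq_mul2l ba orbT.
  by rewrite leqNgt h.
apply: (@leq_trans (p * a.+1)); first by rewrite mulnS ltn_add2r.
by rewrite leq_mul2l h orbT.
Qed.

Lemma mem_slots p L r r' X Y : r < p -> r' < p ->
  (r + p * X \in comb_slots p L (r' + p * Y)) = [&& r == r', Y <= X & X < Y + L].
Proof.
move=> rp r'p; apply/mapP/idP.
  case=> k; rewrite mem_iota add0n => kL E.
  have E2 : r + p * X = r' + p * (Y + k) by rewrite E mulnDr addnA [k * p]mulnC.
  have rr : r = r'.
    by have := congr1 (modn^~ p) E2; rewrite ![p * _]mulnC ![_ + _ * p]addnC !modnMDl !modn_small.
  subst r'; move/eqP: E2; rewrite eqn_add2l.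
  have p0 : 0 < p by lia.
  rewrite eqn_pmul2l // => /eqP ->; rewrite eqxx /=; lia.
case/and3P=> /eqP <- YX XL; exists (X - Y); first by rewrite mem_iota; lia.
by rewrite -addnA [_ * p]mulnC -mulnDr subnKC.
Qed.

Lemma all_slots p L y N : 0 < L ->
  all (fun x => x < N) (comb_slots p L y) = (y + L.-1 * p < N).
Proof.
move=> L0; rewrite /comb_slots all_map; apply/allP/idP => /= h.
  by apply: h; rewrite mem_iota; lia.
move=> k; rewrite mem_iota add0n => /andP [_ kL] /=.
apply: leq_ltn_trans h; rewrite leq_add2l leq_mul2r; apply/orP; right; lia.
Qed.

Lemma sum_split (g : nat -> nat) p n :
  \sum_(0 <= y < p * n) g y = \sum_(0 <= Y < n) \sum_(0 <= r < p) g (r + p * Y).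
Proof.
elim: n => [|n IH]; first by rewrite muln0 !big_geq.
rewrite big_nat_recr //= -IH mulnS addnC (big_cat_nat _ (leq_addr p (p * n))) //=.
congr (_ + _).
by rewrite -{1}[p * n]add0n big_addn addKn.
Qed.

Lemma sum_single (g : nat -> nat) p r : r < p ->
  (forall r', r' < p -> r' != r -> g r' = 0) -> \sum_(0 <= r' < p) g r' = g r.
Proof.
move=> rp h; rewrite big_mkord (bigD1 (Ordinal rp)) //= big1 ?addn0 // => i ir.
apply: h => //; apply: contra ir => /eqP E; apply/eqP; exact: val_inj.
Qed.


Lemma sum_option (T : finType) (F : option T -> nat) :
  \sum_(x : option T) F x = F None + \sum_(c : T) F (Some c).
Proof.
rewrite (bigD1 None) //=; congr (_ + _).
rewrite (reindex_omap Some id) //=; last by case.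
by apply: eq_bigl => c; rewrite eqxx.
Qed.

Section Strip.
Variables (q : nat) (m v : 'I_q -> nat).
Hypothesis Hm : forall i, 0 < m i.
Local Notation C := {i : 'I_q & 'I_(v i)}.
Local Notation X := (option C).
Definition len (c : C) := m (tag c).
Lemma len_gt0 c : 0 < len c. Proof. exact: Hm. Qed.

Fixpoint run (L : nat) (w : nat -> X) (k : nat) : bool :=
  match L with
  | 0 => k == 0
  | L'.+1 => match w 0 with
             | None => (0 < k) && run L' (fun i => w i.+1) k.-1
             | Some c => (k == 0) && run L' (fun i => w i.+1) (len c).-1
             end
  end.

Definition cov1 (w : nat -> X) (Y x : nat) : bool :=
  if w Y is Some c then (Y <= x) && (x < Y + len c) else false.

Definition Valid1 L (w : nat -> X) k : Prop :=
  [/\ k <= L, (forall Y c, Y < L -> w Y = Some c -> Y + len c <= L) &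
      (forall x, x < L -> (x < k) + \sum_(0 <= Y < L) cov1 w Y x = 1)].

Lemma cov_sum0 L w : \sum_(0 <= Y < L.+1) cov1 w Y 0 = (w 0 != None).
Proof.
rewrite big_nat_recl // big1_seq /=; last (by move=> i _; rewrite /cov1; case: (w i.+1)).
by rewrite /cov1; case: (w 0) => [c|] //=; rewrite add0n len_gt0.
Qed.

Lemma cov_sumS L w x : \sum_(0 <= Y < L.+1) cov1 w Y x.+1 =
   cov1 w 0 x.+1 + \sum_(0 <= Y < L) cov1 (fun i => w i.+1) Y x.
Proof.
by rewrite big_nat_recl //; congr (_ + _).
Qed.

Lemma run_valid L w k : run L w k <-> Valid1 L w k.
Proof.
elim: L w k => [|L IH] w k /=.
  split; first by move/eqP->; split.
  by case; rewrite leqn0.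
have IH' := IH (fun i => w i.+1).
case Ew: (w 0) => [c|].
- split.
  + case/andP=> /eqP -> /IH' [h1 h2 h3]; split => //.
    * by case=> [|Y] c' YL; [rewrite Ew => -[<-]; lia | move/h2 => /(_ YL); lia].
    * case=> [|x] xL; first by rewrite cov_sum0 Ew.
      rewrite cov_sumS /cov1 Ew /= -(h3 x xL) /cov1 add0n.
      by have lc := len_gt0 c; congr (nat_of_bool _ + _); apply/idP/idP; lia.
  + case=> h1 h2 h3.
    have := h3 0 isT; rewrite cov_sum0 Ew /= => h0.
    have k0 : k == 0 by lia.
    rewrite k0 /=; apply/IH'; split.
    * by have := h2 0 c isT Ew; lia.
    * by move=> Y c' YL Ec'; have := h2 Y.+1 c' YL Ec'; lia.
    * move=> x xL; have := h3 x.+1 xL; rewrite cov_sumS /cov1 Ew /=.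
      move/eqP: k0 => ->; rewrite /cov1 /= => <-.
      by have lc := len_gt0 c; congr (nat_of_bool _ + _); apply/idP/idP; lia.
- split.
  + case/andP=> k0 /IH' [h1 h2 h3]; split; first by lia.
    * by case=> [|Y] c' YL; [rewrite Ew | move/h2 => /(_ YL); lia].
    * case=> [|x] xL; first by rewrite cov_sum0 Ew k0.
      rewrite cov_sumS /cov1 Ew /= -(h3 x xL) /cov1 add0n.
      by congr (nat_of_bool _ + _); apply/idP/idP; lia.
  + case=> h1 h2 h3.
    have := h3 0 isT; rewrite cov_sum0 Ew /= => h0.
    have k0 : 0 < k by lia.
    rewrite k0 /=; apply/IH'; split.
    * lia.
    * by move=> Y c' YL Ec'; have := h2 Y.+1 c' YL Ec'; lia.
    * move=> x xL; have := h3 x.+1 xL; rewrite cov_sumS /cov1 Ew /=.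
      rewrite /cov1 /= => <-.
      by congr (nat_of_bool _ + _); apply/idP/idP; lia.
Qed.

Definition ext n (f : {ffun 'I_n -> X}) (i : nat) : X :=
  if (insub i : option 'I_n) is Some o then f o else None.

Lemma ext_ord n (f : {ffun 'I_n -> X}) (i : 'I_n) : ext f i = f i.
Proof. by rewrite /ext valK. Qed.

Lemma ext_ge n (f : {ffun 'I_n -> X}) i : n <= i -> ext f i = None.
Proof. by move=> h; rewrite /ext insubF // ltnNge h. Qed.

Definition xcons (x : X) (w : nat -> X) (i : nat) : X :=
  if i is i'.+1 then w i' else x.

Definition mk n (xg : X * {ffun 'I_n -> X}) : {ffun 'I_n.+1 -> X} :=
  [ffun i : 'I_n.+1 => xcons xg.1 (ext xg.2) i].
Definition unmk n (f : {ffun 'I_n.+1 -> X}) : X * {ffun 'I_n -> X} :=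
  (f ord0, [ffun j : 'I_n => f (lift ord0 j)]).

Lemma ext_mk n xg : ext (@mk n xg) = xcons xg.1 (ext xg.2).
Proof.
apply: functional_extensionality => i.
case: (ltnP i n.+1) => h.
  by rewrite -[i]/(val (Ordinal h)) ext_ord ffunE.
rewrite ext_ge //; case: i h => [|i] //= h; by rewrite ext_ge.
Qed.

Lemma mk_bij n : bijective (@mk n).
Proof.
exists (@unmk n).
  case=> x g; rewrite /unmk /mk ffunE /=; congr (_, _).
  by apply/ffunP => j; rewrite !ffunE /= ext_ord.
move=> f; apply/ffunP => i; rewrite /mk /unmk ffunE /=.
case: i => [[|i] h] /=; first by congr (f _); apply: val_inj.
rewrite (@ext_ord n _ (Ordinal (h : i < n))) ffunE; congr (f _); exact: val_inj.
Qed.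

Lemma card_cons n (P : (nat -> X) -> bool) :
  #|[set f : {ffun 'I_n.+1 -> X} | P (ext f)]| =
  \sum_(x : X) #|[set g : {ffun 'I_n -> X} | P (xcons x (ext g))]|.
Proof.
rewrite -sum1_card (reindex (@mk n)); last exact: onW_bij (mk_bij n).
rewrite (eq_bigr (fun x => \sum_(g in [set g : {ffun 'I_n -> X} | P (xcons x (ext g))]) 1)); last by move=> x _; rewrite sum1_card.
rewrite pair_big_dep; apply: eq_bigl => -[x g]; by rewrite !inE ext_mk.
Qed.

Definition Ncount n k := #|[set u : {ffun 'I_n -> X} | run n (ext u) k]|.

Lemma card_band (T : finType) (b : bool) (P : pred T) :
  #|[set u | b && P u]| = b * #|[set u | P u]|.
Proof.
case: b => /=; first by rewrite mul1n.
by rewrite mul0n; apply/eqP; rewrite cards_eq0; apply/eqP/setP => u; rewrite !inE.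
Qed.

Lemma Ncount0 k : Ncount 0 k = (k == 0).
Proof.
rewrite /Ncount /=; case: (k == 0).
  transitivity #|{: {ffun 'I_0 -> X}}|; first by apply: eq_card => u; rewrite !inE.
  by rewrite card_ffun card_ord.
by apply/eqP; rewrite cards_eq0; apply/eqP/setP => u; rewrite !inE.
Qed.

Lemma NcountS n k : Ncount n.+1 k =
  (0 < k) * Ncount n k.-1 + (k == 0) * \sum_(c : C) Ncount n (len c).-1.
Proof.
rewrite /Ncount (@card_cons n (fun w => run n.+1 w k)) sum_option /=.
rewrite card_band big_distrr /=; congr (_ + _).
by apply: eq_bigr => c _; rewrite card_band.
Qed.

Lemma Ncount_formula (sN : nat -> nat) :
  sN 0 = 1 ->
  (forall n, sN n.+1 = \sum_(c : C) (len c <= n.+1) * sN (n.+1 - len c)) ->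
  forall n k, Ncount n k = (k <= n) * sN (n - k).
Proof.
move=> s0 sS; elim=> [|n IH] k.
  by rewrite Ncount0; case: k => [|k] //=; rewrite s0.
rewrite NcountS; case: k => [|k] /=.
  rewrite mul1n add0n sS mul1n; apply: eq_bigr => c _; rewrite IH.
  have lc := len_gt0 c.
  have -> : n - (len c).-1 = n.+1 - len c by lia.
  by congr (nat_of_bool _ * _); apply/idP/idP; lia.
by rewrite IH mul1n mul0n addn0.
Qed.

Variables (p : nat) (Hp : 0 < p).

Definition Psi n (f : {ffun 'I_(p * n) -> X}) : {set placement p n v} :=
  [set P : placement p n v | f P.1 == Some P.2].

Definition wr n (f : {ffun 'I_(p * n) -> X}) r : nat -> X := fun Y => ext f (r + p * Y).

Definition covP n (f : {ffun 'I_(p * n) -> X}) y x : bool :=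
  if ext f y is Some c then x \in comb_slots p (len c) y else false.

Lemma card_cover n (f : {ffun 'I_(p * n) -> X}) (x : 'I_(p * n)) :
  #|[set P in Psi f | nat_of_ord x \in pslots m P]| =
  \sum_(0 <= Y < n) cov1 (wr f (x %% p)) Y (x %/ p).
Proof.
have E : forall y : 'I_(p * n), nat_of_bool (covP f y x) =
    \sum_(c | (f y == Some c) && (nat_of_ord x \in comb_slots p (len c) y)) 1.
  move=> y; rewrite /covP ext_ord; case: (f y) => [c0|]; last by rewrite big_pred0.
  case B: (nat_of_ord x \in comb_slots p (len c0) y).
    rewrite (big_pred1 c0) // => c /=.
    case: eqP => [[<-]|ne]; first by rewrite B eqxx.
    by symmetry; apply/eqP => Ec; apply: ne; rewrite Ec.
  rewrite big_pred0 // => c; case: eqP => [[<-]|] //=.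
transitivity (\sum_(y < p * n) covP f y x).
  rewrite (eq_bigr _ (fun y _ => E y)) pair_big_dep -sum1_card.
  by apply: eq_bigl => -[y c]; rewrite !inE.
rewrite -(big_mkord xpredT (fun y => nat_of_bool (covP f y x))) sum_split.
apply: eq_bigr => Y _.
have Ex : nat_of_ord x = x %% p + p * (x %/ p) by rewrite [in LHS](divn_eq x p) addnC (mulnC (x %/ p)).
rewrite (sum_single (r := x %% p)) ?ltn_pmod //.
  rewrite /covP /cov1 /wr; case: ext => // c.
  by rewrite {1}Ex mem_slots ?ltn_pmod // eqxx.
move=> r' r'p ne; rewrite /covP; case: ext => // c.
by rewrite {1}Ex mem_slots ?ltn_pmod // eq_sym (negbTE ne).
Qed.

Lemma slot_end r Y L : r + p * Y + L * p = r + p * (Y + L).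
Proof. by rewrite mulnDr addnA (mulnC L). Qed.

Lemma modn_split r Y : r < p -> (r + p * Y) %% p = r.
Proof. by move=> rp; rewrite addnC mulnC modnMDl modn_small. Qed.

Lemma divn_split r Y : r < p -> (r + p * Y) %/ p = Y.
Proof. by move=> rp; rewrite addnC mulnC divnMDl // divn_small // addn0. Qed.

Lemma tiling_iff n (f : {ffun 'I_(p * n) -> X}) :
  is_tiling m (Psi f) <-> forall r, r < p -> Valid1 n (wr f r) 0.
Proof.
rewrite /is_tiling; split.
- case/andP => /forallP h1 /forallP h2 r rp; split => //.
  + move=> Y c Yn E.
    have yl : r + p * Y < p * n by rewrite lt_split.
    have Ef : f (Ordinal yl) = Some c by rewrite -ext_ord.
    move/implyP: (h1 (Ordinal yl, c)); rewrite inE /= Ef eqxx => /(_ isT).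
    rewrite /pslots /ptype /= all_slots ?len_gt0 // slot_end lt_split //.
    by have := len_gt0 c; rewrite /len; lia.
  + move=> x xn; rewrite add0n.
    have yl : r + p * x < p * n by rewrite lt_split.
    by have := eqP (h2 (Ordinal yl)); rewrite card_cover /= modn_split ?divn_split.
- move=> h; apply/andP; split.
  + apply/forallP => -[y c]; apply/implyP; rewrite inE /= => /eqP Ef.
    have rp : y %% p < p by rewrite ltn_pmod.
    have Yn : y %/ p < n by rewrite ltn_divLR // (mulnC n p).
    have Ey : nat_of_ord y = y %% p + p * (y %/ p)
      by rewrite [in LHS](divn_eq y p) addnC (mulnC (y %/ p)).
    case: (h _ rp) => _ h2 _.
    have := h2 _ c Yn; rewrite /wr -Ey ext_ord Ef => /(_ erefl) H.
    rewrite /pslots /ptype /= all_slots ?len_gt0 // Ey slot_end lt_split //.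
    by move: H; have := len_gt0 c; rewrite /len; lia.
  + apply/forallP => x; apply/eqP; rewrite card_cover.
    have rp : x %% p < p by rewrite ltn_pmod.
    have Xn : x %/ p < n by rewrite ltn_divLR // (mulnC n p).
    by case: (h _ rp) => _ _ /(_ _ Xn); rewrite add0n.
Qed.

Definition Bp n (f : {ffun 'I_(p * n) -> X}) := [forall r : 'I_p, run n (wr f r) 0].

Lemma Bp_iff n f : Bp f <-> forall r, r < p -> Valid1 n (@wr n f r) 0.
Proof.
split.
  by move=> /forallP h r rp; apply/run_valid; exact: (h (Ordinal rp)).
by move=> h; apply/forallP => r; apply/run_valid; apply: h.
Qed.

Lemma Psi_inj n : injective (@Psi n).
Proof.
move=> f g E; apply/ffunP => y.
case Ef: (f y) => [c|].
  have : (y, c) \in Psi f by rewrite inE /= Ef.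
  by rewrite E inE /= => /eqP.
case Eg: (g y) => [c|] //.
have : (y, c) \in Psi g by rewrite inE /= Eg.
by rewrite -E inE /= Ef.
Qed.

Lemma slot_self L y : 0 < L -> y \in comb_slots p L y.
Proof. by move=> L0; apply/mapP; exists 0; [rewrite mem_iota | rewrite mul0n addn0]. Qed.

Definition pickw n (T : {set placement p n v}) : {ffun 'I_(p * n) -> X} :=
  [ffun y => [pick c | ((y, c) : placement p n v) \in T]].

Lemma Psi_pickw n (T : {set placement p n v}) : is_tiling m T -> Psi (pickw T) = T.
Proof.
case/andP => _ /forallP h2.
apply/setP => -[y c]; rewrite inE ffunE /=.
case: pickP => [c' Hc'|H]; last by rewrite H.
apply/eqP/idP => [[<-] //| Hc].
have /cards1P [a Ea] := h2 y.
have : ((y, c) : placement p n v) \in [set P in T | nat_of_ord y \in pslots m P].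
  by rewrite inE Hc /pslots /ptype /= slot_self // len_gt0.
have : ((y, c') : placement p n v) \in [set P in T | nat_of_ord y \in pslots m P].
  by rewrite inE Hc' /pslots /ptype /= slot_self // len_gt0.
by rewrite Ea !inE => /eqP E1 /eqP E2; move: E1; rewrite -E2 => -[->].
Qed.

Lemma tilings_eq n : tilings p n m v = (@Psi n) @: [set f | @Bp n f].
Proof.
apply/setP => T; rewrite inE; apply/idP/imsetP.
  move=> HT; exists (pickw T); last by rewrite Psi_pickw.
  by rewrite inE; apply/Bp_iff/tiling_iff; rewrite Psi_pickw.
by case=> f; rewrite inE => /Bp_iff /tiling_iff H ->.
Qed.

Definition splitf n (f : {ffun 'I_(p * n) -> X}) : {ffun 'I_p -> {ffun 'I_n -> X}} :=
  [ffun r : 'I_p => [ffun Y : 'I_n => ext f (r + p * Y)]].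
Definition extP n (F : {ffun 'I_p -> {ffun 'I_n -> X}}) (r Y : nat) : X :=
  if (insub r : option 'I_p) is Some o then ext (F o) Y else None.
Definition mergef n (F : {ffun 'I_p -> {ffun 'I_n -> X}}) : {ffun 'I_(p * n) -> X} :=
  [ffun x : 'I_(p * n) => extP F (x %% p) (x %/ p)].

Lemma ext_split n f (r : 'I_p) : ext (@splitf n f r) = wr f r.
Proof.
apply: functional_extensionality => Y; rewrite /wr.
case: (ltnP Y n) => h.
  by rewrite -[Y]/(val (Ordinal h)) ext_ord !ffunE.
rewrite !ext_ge //; by rewrite leqNgt lt_split // -leqNgt.
Qed.

Lemma merge_split n : cancel (@splitf n) (@mergef n).
Proof.
move=> f; apply/ffunP => x; rewrite ffunE /extP.
have rp := ltn_pmod x Hp.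
have Ex : nat_of_ord x = x %% p + p * (x %/ p)
  by rewrite [in LHS](divn_eq x p) addnC (mulnC (x %/ p)).
rewrite -[x %% p]/(val (Ordinal rp)) valK ext_split /wr /= -Ex.
by rewrite ext_ord.
Qed.

Lemma split_merge n : cancel (@mergef n) (@splitf n).
Proof.
move=> F; apply/ffunP => r; apply/ffunP => Y; rewrite !ffunE.
have yl : r + p * Y < p * n by rewrite lt_split.
rewrite -[r + p * Y]/(val (Ordinal yl)) ext_ord ffunE /= modn_split // divn_split //.
by rewrite /extP valK ext_ord.
Qed.

Lemma card_S2 n : #|[set f | @Bp n f]| =
  #|[set F : {ffun 'I_p -> {ffun 'I_n -> X}} | [forall r, run n (ext (F r)) 0]]|.
Proof.
rewrite -(card_imset _ (can_inj (@merge_split n))). 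
apply: eq_card => F; rewrite [RHS]inE; apply/imsetP/idP.
  case=> f; rewrite inE => /forallP Hf ->; apply/forallP => r.
  by rewrite ext_split; apply: Hf.
move=> /forallP HF; exists (mergef F); last by rewrite split_merge.
by rewrite inE; apply/forallP => r; rewrite -ext_split split_merge; apply: HF.
Qed.

Lemma card_S3 n :
  #|[set F : {ffun 'I_p -> {ffun 'I_n -> X}} | [forall r, run n (ext (F r)) 0]]| =
  Ncount n 0 ^ p.
Proof.
rewrite /Ncount -[p in _ ^ p](card_ord p) -card_ffun_on; apply: eq_card => F.
rewrite inE; apply/forallP/ffun_onP => h r; first by rewrite inE.
by move: (h r); rewrite inE.
Qed.

Lemma A_count_Ncount n : A_count p n m v = Ncount n 0 ^ p.
Proof.
by rewrite /A_count tilings_eq card_imset; [rewrite card_S2 card_S3 | exact: Psi_inj].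
Qed.

End Strip.

Lemma sum_sig q (v : 'I_q -> nat) (F : 'I_q -> nat) :
  \sum_(c : {i : 'I_q & 'I_(v i)}) F (tag c) = \sum_(i < q) v i * F i.
Proof.
have := @sig_big_dep nat 0 addn _ (fun i => 'I_(v i)) xpredT (fun i => xpredT) (fun i j => F i).
move=> /= <-; apply: eq_bigr => i _; by rewrite sum_nat_const card_ord.
Qed.

Import Order.TTheory GRing.Theory Num.Theory.

Theorem corollary1 (p q : nat) (m v : 'I_q -> nat) (s : int -> nat) :
  0 < p -> 0 < q ->
  (forall i j : 'I_q, (i < j)%N -> (m i < m j)%N) ->
  (forall i, 0 < m i) -> (forall i, 0 < v i) ->
  (forall n : int, (n < 0)%R -> s n = 0) ->
  (forall n : int, (0 <= n)%R ->
     s n = (\sum_(i < q) v i * s (n - Posz (m i))%R) + (n == 0%R)) ->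
  forall n : nat, A_count p n m v = s (Posz n) ^ p.
Proof.
move=> p0 q0 _ Hm Hv sneg srec n.
rewrite (A_count_Ncount v Hm p0).
pose sN := fun k : nat => s (Posz k).
have s0 : sN 0 = 1.
  rewrite /sN srec // big1 // => i _.
  by rewrite sneg ?muln0 // sub0r oppr_lt0 ltz_nat Hm.
have sS : forall k : nat, sN k.+1 = \sum_(c : {i : 'I_q & 'I_(v i)}) (len m c <= k.+1) * sN (k.+1 - len m c).
  move=> k; rewrite /sN srec // addn0 /len.
  rewrite (sum_sig v (fun i => (m i <= k.+1) * s (Posz (k.+1 - m i)))).
  apply: eq_bigr => i _; case: (leqP (m i) k.+1) => h.
    by rewrite mul1n subzn.
  rewrite sneg; first by rewrite /= muln0.
  by rewrite subr_lt0 ltz_nat.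
by rewrite (Ncount_formula Hm s0 sS) leq0n mul1n subn0.
Qed.
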